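(* Let $d\ge3$, $n_1,\dots,n_d,k$ positive integers, $\mathfrak{L}$ an invertible linear transform as in the context, $\tau>0$, $0<p<1$ and $w=(w_{i,j})$ nonnegative weights. Let $\boldsymbol{\mathcal{A}}=\boldsymbol{\mathcal{Q}}_1*_{\mathfrak{L}}\boldsymbol{\mathcal{B}}*_{\mathfrak{L}}\boldsymbol{\mathcal{Q}}_2^T\in\mathbb{R}^{n_1\times n_2\times n_3\times\cdots\times n_d}$, where $\boldsymbol{\mathcal{Q}}_1\in\mathbb{R}^{n_1\times k\times n_3\times\cdots\times n_d}$ and $\boldsymbol{\mathcal{Q}}_2\in\mathbb{R}^{n_2\times k\times n_3\times\cdots\times n_d}$ are partially orthogonal and $\boldsymbol{\mathcal{B}}\in\mathbb{R}^{k\times k\times n_3\times\cdots\times n_d}$. Then $$\boldsymbol{\mathcal{D}}_{\boldsymbol{\mathcal{W}},p,\tau}(\boldsymbol{\mathcal{A}})=\boldsymbol{\mathcal{Q}}_1*_{\mathfrak{L}}\boldsymbol{\mathcal{D}}_{\boldsymbol{\mathcal{W}},p,\tau}(\boldsymbol{\mathcal{B}})*_{\mathfrak{L}}\boldsymbol{\mathcal{Q}}_2^T.$$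
   Context: Transform: for $i=3,\dots,d$ let $\bm U_{n_i}\in\mathbb{C}^{n_i\times n_i}$ satisfy $\bm U_{n_i}\bm U_{n_i}^H=\bm U_{n_i}^H\bm U_{n_i}=\alpha_i\bm I_{n_i}$, $\alpha_i>0$. For a tensor $\boldsymbol{\mathcal{A}}$ of size $m_1\times m_2\times n_3\times\cdots\times n_d$, $\mathfrak{L}(\boldsymbol{\mathcal{A}})=\boldsymbol{\mathcal{A}}\times_3\bm U_{n_3}\cdots\times_d\bm U_{n_d}$ (mode-$k$ product $\boldsymbol{\mathcal{B}}=\boldsymbol{\mathcal{A}}\times_k\bm M$ iff $\bm B_{(k)}=\bm M\bm A_{(k)}$), with inverse $\mathfrak{L}^{-1}$. Frontal slices $\boldsymbol{\mathcal{A}}^{<j>}=\boldsymbol{\mathcal{A}}(:,:,i_3,\dots,i_d)$, $j=i_3+\sum_{a=4}^d(i_a-1)\prod_{b=3}^{a-1}n_b\in\{1,\dots,N\}$, $N=n_3\cdots n_d$. t-product: $\boldsymbol{\mathcal{C}}=\boldsymbol{\mathcal{A}}*_{\mathfrak{L}}\boldsymbol{\mathcal{B}}$ iff $\mathfrak{L}(\boldsymbol{\mathcal{C}})^{<j>}=\mathfrak{L}(\boldsymbol{\mathcal{A}})^{<j>}\mathfrak{L}(\boldsymbol{\mathcal{B}})^{<j>}$ for all $j$. Transpose: $\mathfrak{L}(\boldsymbol{\mathcal{A}}^T)^{<j>}=(\mathfrak{L}(\boldsymbol{\mathcal{A}})^{<j>})^H$. Identity tensor: $\mathfrak{L}(\boldsymbol{\mathcal{I}})^{<j>}=\bm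 I$ for all $j$. $\boldsymbol{\mathcal{Q}}$ is partially orthogonal if $\boldsymbol{\mathcal{Q}}^T*_{\mathfrak{L}}\boldsymbol{\mathcal{Q}}=\boldsymbol{\mathcal{I}}$, orthogonal if also $\boldsymbol{\mathcal{Q}}*_{\mathfrak{L}}\boldsymbol{\mathcal{Q}}^T=\boldsymbol{\mathcal{I}}$. f-diagonal: all frontal slices diagonal. T-SVD: $\boldsymbol{\mathcal{A}}=\boldsymbol{\mathcal{U}}*_{\mathfrak{L}}\boldsymbol{\mathcal{S}}*_{\mathfrak{L}}\boldsymbol{\mathcal{V}}^T$, $\boldsymbol{\mathcal{U}},\boldsymbol{\mathcal{V}}$ orthogonal, $\boldsymbol{\mathcal{S}}$ f-diagonal, obtained from slice-wise SVDs of $\mathfrak{L}(\boldsymbol{\mathcal{A}})^{<j>}$ with singular values in non-increasing order. GST: for $s\in\mathbb{R}$, $w\ge0$, $0<p<1$, $\delta=[2w(1-p)]^{\frac1{2-p}}+wp[2w(1-p)]^{\frac{p-1}{2-p}}$; $\mathrm{GST}(s,w,p)=0$ if $|s|\le\delta$, else $\mathrm{sign}(s)\hat\alpha^*$ with $\hat\alpha^*$ the largest positive root of $\alpha+wp\alpha^{p-1}=|s|$; $\mathrm{GST}(s,0,p)=s$. GTSVT: for a tensor $\boldsymbol{\mathcal{A}}$ of size $m_1\times m_2\times n_3\times\cdots\times n_d$ with T-SVD $\boldsymbol{\mathcal{U}}*_{\mathfrak{L}}\boldsymbol{\mathcal{S}}*_{\mathfrak{L}}\boldsymbol{\mathcal{V}}^T$,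 $\boldsymbol{\mathcal{D}}_{\boldsymbol{\mathcal{W}},p,\tau}(\boldsymbol{\mathcal{A}})=\boldsymbol{\mathcal{U}}*_{\mathfrak{L}}\mathfrak{L}^{-1}(\hat{\boldsymbol{\mathcal{S}}})*_{\mathfrak{L}}\boldsymbol{\mathcal{V}}^T$, where $\hat{\boldsymbol{\mathcal{S}}}$ is f-diagonal with $\hat{\boldsymbol{\mathcal{S}}}^{<j>}(i,i)=\mathrm{GST}\big(\mathfrak{L}(\boldsymbol{\mathcal{S}})^{<j>}(i,i),\tau w_{i,j},p\big)$ for $i\le\min(m_1,m_2)$; $\boldsymbol{\mathcal{W}}$ denotes the f-diagonal weight tensor with $\boldsymbol{\mathcal{W}}^{<j>}(i,i)=w_{i,j}$, the same weights being used regardless of the first two dimensions of the argument. *)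

(* Defs.v *)
From HB Require Import structures.
From mathcomp Require Import all_boot all_order all_algebra.
From mathcomp Require Import all_classical all_reals all_analysis.
From mathcomp Require Import complex.

Set Implicit Arguments.
Unset Strict Implicit.
Unset Printing Implicit Defensive.

Import Order.TTheory GRing.Theory Num.Theory.
Local Open Scope ring_scope.

Section GST.
Variable R : realType.

Definition gst_delta (w p : R) : R :=
  (2 * w * (1 - p)) `^ (1 / (2 - p))
  + w * p * (2 * w * (1 - p)) `^ ((p - 1) / (2 - p)).

Definition gst_root (s w p alpha : R) : Prop :=
  0 < alpha /\ alpha + w * p * alpha `^ (p - 1) = `|s|.

Definition gst_largest_root (s w p : R) : R :=
  xget 0 [set a | gst_root s w p a /\ (forall b, gst_root s w p b -> b <= a)].

Definition GST (s w p : R) : R :=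
  if w == 0 then s
  else if `|s| <= gst_delta w p then 0
  else Num.sg s * gst_largest_root s w p.

End GST.

(* Order-d tensors m1 x m2 x n_3 x ... x n_d, stored by frontal slices  *)
(* indexed by the (0-based) linear index                                *)
(*   j = i_3 + sum_{a=4}^d i_a prod_{b=3}^{a-1} n_b ,  0 <= i_a < n_a.  *)
Section Tensors.
Variable R : realType.
Local Notation C := (R[i]).
Variables (d : nat) (n : nat -> nat) (U : forall a : nat, 'M[C]_(n a)).

Definition NN : nat := \prod_(3 <= a < d.+1) n a.

Definition digit (a j : nat) : nat := (j %/ \prod_(3 <= b < a) n b) %% n a.

Definition mxnat (m : nat) (M : 'M[C]_m) (r c : nat) : C :=
  match (insub r : option 'I_m), (insub c : option 'I_m) with
  | Some r', Some c' => M r' c'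
  | _, _ => 0
  end.

Definition dgnat (m1 m2 : nat) (M : 'M[C]_(m1, m2)) (i : nat) : C :=
  match (insub i : option 'I_m1), (insub i : option 'I_m2) with
  | Some r, Some c => M r c
  | _, _ => 0
  end.

Definition tensor (m1 m2 : nat) := {ffun 'I_NN -> 'M[C]_(m1, m2)}.

(* kernel of the iterated mode products  x_3 M_3 ... x_d M_d  acting on
   the tube index:  (A x_3 M_3 ... x_d M_d)(:,:,j)
      = sum_j' (prod_a M_a(i_a(j), i_a(j'))) A(:,:,j')                 *)
Definition modeker (M : forall a : nat, 'M[C]_(n a)) (j j' : nat) : C :=
  \prod_(3 <= a < d.+1) mxnat (M a) (digit a j) (digit a j').

Definition modeprod (M : forall a : nat, 'M[C]_(n a)) (m1 m2 : nat)
    (A : tensor m1 m2) : tensor m1 m2 :=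
  [ffun j : 'I_NN => \sum_(j' < NN) modeker M j j' *: A j'].

Definition Lt (m1 m2 : nat) (A : tensor m1 m2) : tensor m1 m2 :=
  modeprod U A.
Definition Linv (m1 m2 : nat) (A : tensor m1 m2) : tensor m1 m2 :=
  modeprod (fun a => invmx (U a)) A.

Definition ctmx (m1 m2 : nat) (M : 'M[C]_(m1, m2)) : 'M[C]_(m2, m1) :=
  (map_mx (fun x : C => x^*) M)^T.

Definition tprod (m1 m2 m3 : nat) (A : tensor m1 m2) (B : tensor m2 m3)
  : tensor m1 m3 := Linv [ffun j => Lt A j *m Lt B j].

Definition ttr (m1 m2 : nat) (A : tensor m1 m2) : tensor m2 m1 :=
  Linv [ffun j => ctmx (Lt A j)].

Definition tid (m : nat) : tensor m m := Linv [ffun j => 1%:M].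

Definition partially_orthogonal (m k : nat) (Q : tensor m k) : Prop :=
  tprod (ttr Q) Q = tid k.

Definition orthogonal (m : nat) (Q : tensor m m) : Prop :=
  tprod (ttr Q) Q = tid m /\ tprod Q (ttr Q) = tid m.

Definition fdiagonal (m1 m2 : nat) (S : tensor m1 m2) : Prop :=
  forall (j : 'I_NN) (r : 'I_m1) (c : 'I_m2), (r : nat) != c -> S j r c = 0.

Definition real_tensor (m1 m2 : nat) (A : tensor m1 m2) : Prop :=
  forall j r c, A j r c \is Num.real.

Definition is_TSVD (m1 m2 : nat) (A : tensor m1 m2)
    (Ut : tensor m1 m1) (S : tensor m1 m2) (V : tensor m2 m2) : Prop :=
  [/\ orthogonal Ut /\ orthogonal V, fdiagonal S,
      (forall (j : 'I_NN) (i : nat), (i < minn m1 m2)%N ->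
          0 <= dgnat (Lt S j) i),
      (forall (j : 'I_NN) (i : nat), (i.+1 < minn m1 m2)%N ->
          dgnat (Lt S j) i.+1 <= dgnat (Lt S j) i)
    & A = tprod (tprod Ut S) (ttr V)].

(* hat S : f-diagonal, hat S^{<j>}(i,i) = GST(L(S)^{<j>}(i,i), tau w_{i,j}, p)
   (indices i, j are 0-based here) *)
Definition Shat (w : nat -> nat -> R) (p tau : R) (m1 m2 : nat)
    (S : tensor m1 m2) : tensor m1 m2 :=
  [ffun j : 'I_NN => \matrix_(r < m1, c < m2)
     if (r : nat) == c
     then (GST (complex.Re (Lt S j r c)) (tau * w r j) p)%:C%C
     else 0].

(* X is a value of the GTSVT operator D_{W,p,tau}(A), computed from some
   T-SVD of A (the T-SVD is not unique, so D is a relation). *)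
Definition GTSVT (w : nat -> nat -> R) (p tau : R) (m1 m2 : nat)
    (A X : tensor m1 m2) : Prop :=
  exists (Ut : tensor m1 m1) (S : tensor m1 m2) (V : tensor m2 m2),
    is_TSVD A Ut S V /\
    X = tprod (tprod Ut (Linv (Shat w p tau S))) (ttr V).

End Tensors.

(* Main.v *)
Require Import Defs.
From HB Require Import structures.
From mathcomp Require Import all_boot all_order all_algebra.
From mathcomp Require Import all_classical all_reals all_analysis.
From mathcomp Require Import complex.
From mathcomp Require Import zify.
Import Order.TTheory GRing.Theory Num.Theory.
Local Open Scope ring_scope.
Set Implicit Arguments.
Unset Strict Implicit.
Unset Printing Implicit Defensive.

Section Digits.
Variable n : nat -> nat.
Definition PP (b : nat) : nat := (\prod_(3 <= c < b) n c)%N.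

Lemma PP_gt0 b : (forall c, (3 <= c < b)%N -> (0 < n c)%N) -> (0 < PP b)%N.
Proof.
move=> H; rewrite /PP big_seq; apply: prodn_cond_gt0 => c.
by rewrite mem_index_iota => Hc; apply: H.
Qed.

Lemma PP_S m : (3 <= m)%N -> PP m.+1 = (PP m * n m)%N.
Proof. by move=> H; rewrite /PP big_nat_recr. Qed.

Lemma PP_le3 m : (m <= 3)%N -> PP m = 1%N.
Proof. by move=> H; rewrite /PP big_geq. Qed.

Lemma digit_low m q r a : (forall c, (3 <= c < m)%N -> (0 < n c)%N) ->
  (3 <= a < m)%N -> digit n a (q * PP m + r) = digit n a r.
Proof.
move=> Hpos /andP[Ha1 Ha2].
have -> : PP m = (PP a * (n a * \prod_(a.+1 <= c < m) n c))%N.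
  rewrite /PP (big_cat_nat Ha1 (ltnW Ha2)) /=.
  by rewrite (big_ltn Ha2).
have Pa : (0 < PP a)%N by apply: PP_gt0 => c Hc; apply: Hpos; lia.
rewrite /digit -/(PP a).
set X := (\prod_(a.+1 <= c < m) n c)%N.
have -> : (q * (PP a * (n a * X)) = (q * X * n a) * PP a)%N.
  by lia.
by rewrite divnMDl // modnMDl.
Qed.

Lemma digit_top m q r : (forall c, (3 <= c < m.+1)%N -> (0 < n c)%N) ->
  (3 <= m)%N -> (r < PP m)%N -> (q < n m)%N -> digit n m (q * PP m + r) = q.
Proof.
move=> Hpos Hm Hr Hq.
have Pm : (0 < PP m)%N by apply: PP_gt0 => c Hc; apply: Hpos; lia.
by rewrite /digit -/(PP m) divnMDl // divn_small // addn0 modn_small.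
Qed.

Lemma sum_split (R : nmodType) a b (G : nat -> R) :
  \sum_(0 <= j < a * b) G j = \sum_(0 <= q < b) \sum_(0 <= r < a) G (q * a + r)%N.
Proof.
elim: b => [|b IH]; first by rewrite muln0 !big_geq.
rewrite big_nat_recr //= -IH mulnS addnC.
rewrite (big_cat_nat (leq0n (a * b)) (leq_addr a (a * b))) /=.
congr (_ + _).
rewrite -{1}(add0n (a * b)%N) big_addn.
rewrite [(a * b + a)%N]addnC addnK.
by apply: eq_bigr => i _; rewrite addnC mulnC.
Qed.

Lemma digit_sum (R : comPzSemiRingType) m (F : nat -> nat -> R) :
  (forall c, (3 <= c < m)%N -> (0 < n c)%N) ->
  \sum_(0 <= j < PP m) \prod_(3 <= a < m) F a (digit n a j)
  = \prod_(3 <= a < m) \sum_(0 <= t < n a) F a t.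
Proof.
elim: m => [|m IH] Hpos.
  by rewrite PP_le3 // big_nat1 !big_geq.
case: (leqP m 2) => Hm.
  by rewrite PP_le3 // big_nat1 !big_geq.
have Hm3 : (3 <= m)%N by [].
rewrite PP_S // sum_split.
rewrite big_nat_recr //= -IH; last by move=> c Hc; apply: Hpos; lia.
rewrite mulr_sumr.
apply: eq_big_nat => q /andP[_ Hq].
rewrite mulr_suml.
apply: eq_big_nat => r /andP[_ Hr].
rewrite big_nat_recr //= digit_top //.
congr (_ * _).
apply: eq_big_nat => a Ha; rewrite (@digit_low m) //.
by move=> c Hc; apply: Hpos; lia.
Qed.

Lemma digit_inj m j j' : (forall c, (3 <= c < m)%N -> (0 < n c)%N) ->
  (j < PP m)%N -> (j' < PP m)%N ->
  (forall a, (3 <= a < m)%N -> digit n a j = digit n a j') -> j = j'.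
Proof.
elim: m j j' => [|m IH] j j' Hpos Hj Hj' Hd.
  by move: Hj Hj'; rewrite PP_le3 //; lia.
case: (leqP m 2) => Hm.
  by move: Hj Hj'; rewrite PP_le3 //; lia.
have Pm : (0 < PP m)%N by apply: PP_gt0 => c Hc; apply: Hpos; lia.
have Hpos' : forall c, (3 <= c < m)%N -> (0 < n c)%N.
  by move=> c Hc; apply: Hpos; lia.
have Hq : forall x, (x < PP m.+1)%N -> (x %/ PP m < n m)%N.
  by move=> x Hx; rewrite ltn_divLR // mulnC -PP_S.
rewrite (div.divn_eq j (PP m)) (div.divn_eq j' (PP m)).
have E1 : (j %% PP m = j' %% PP m)%N.
  apply: IH => //; try by rewrite ltn_mod.
  move=> a Ha.
  have := @digit_low m (j %/ PP m) (j %% PP m) a Hpos' Ha.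
  rewrite -div.divn_eq => <-.
  have := @digit_low m (j' %/ PP m) (j' %% PP m) a Hpos' Ha.
  rewrite -div.divn_eq => <-.
  by apply: Hd; lia.
have E2 : (j %/ PP m = j' %/ PP m)%N.
  have T1 := @digit_top m (j %/ PP m) (j %% PP m) Hpos Hm (ltn_pmod _ Pm) (Hq j Hj).
  have T2 := @digit_top m (j' %/ PP m) (j' %% PP m) Hpos Hm (ltn_pmod _ Pm) (Hq j' Hj').
  rewrite -!div.divn_eq in T1 T2.
  by rewrite -T1 -T2; apply: Hd; lia.
by rewrite E1 E2.
Qed.

End Digits.

Section Kernel.
Variable R : realType.
Local Notation C := (R[i]).
Variables (d : nat) (n : nat -> nat).
Hypothesis npos : forall c, (3 <= c < d.+1)%N -> (0 < n c)%N.

Lemma insub_ord m x (Hx : (x < m)%N) : insub x = Some (Ordinal Hx).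
Proof.
case: insubP => [u _ Hu|]; last by rewrite Hx.
by congr Some; apply: val_inj.
Qed.

Lemma mxnat_mul m (A B : 'M[C]_m) x y : (x < m)%N -> (y < m)%N ->
  \sum_(0 <= t < m) mxnat A x t * mxnat B t y = mxnat (A *m B) x y.
Proof.
move=> Hx Hy; rewrite big_mkord /mxnat (insub_ord Hx) (insub_ord Hy) mxE.
by apply: eq_bigr => t _; rewrite valK.
Qed.

Lemma mxnat1 m x y : (x < m)%N -> (y < m)%N ->
  mxnat (1%:M : 'M[C]_m) x y = (x == y)%:R.
Proof. by move=> Hx Hy; rewrite /mxnat (insub_ord Hx) (insub_ord Hy) mxE. Qed.

Lemma digit_lt a j : (3 <= a < d.+1)%N -> (digit n a j < n a)%N.
Proof. by move=> Ha; rewrite /digit ltn_mod npos. Qed.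

Lemma ker_mul (M N : forall a, 'M[C]_(n a)) :
  (forall a, (3 <= a < d.+1)%N -> M a *m N a = 1%:M) ->
  forall j j'' : 'I_(NN d n),
  \sum_(j' < NN d n) modeker d M j j' * modeker d N j' j'' = (j == j'')%:R.
Proof.
move=> HMN j j''.
under eq_bigr do rewrite /modeker -big_split /=.
rewrite -(big_mkord xpredT (fun j' => \prod_(3 <= i < d.+1)
   (mxnat (M i) (digit n i j) (digit n i j') *
    mxnat (N i) (digit n i j') (digit n i j'')))).
rewrite (@digit_sum n _ d.+1 (fun a t => mxnat (M a) (digit n a j) t *
    mxnat (N a) t (digit n a j''))) //.
under eq_big_nat => a Ha do
  rewrite (mxnat_mul _ _ (digit_lt _ Ha) (digit_lt _ Ha)) HMN //
          mxnat1 ?digit_lt //.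
case: (boolP (has (fun a => digit n a j != digit n a j'') (index_iota 3 d.+1))).
- move=> Hh.
  have -> : (j == j'') = false.
    apply/negbTE; apply/negP => /eqP Ej; move: Hh; rewrite Ej.
    by move/hasP => [a _]; rewrite eqxx.
  apply/eqP; rewrite prodf_seq_eq0.
  move/hasP: Hh => [a Ha Hne]; apply/hasP; exists a => //=.
  by rewrite (negbTE Hne).
- move/hasPn => Hall.
  have -> : (j == j'') = true.
    apply/eqP/val_inj/(@digit_inj n d.+1 _ _ npos (ltn_ord j) (ltn_ord j'')) => a Ha.
    by apply/eqP; have := Hall a; rewrite mem_index_iota negbK; apply.
  rewrite big1_seq // => a /andP[_ Ha].
  by have := Hall a Ha; rewrite negbK => /eqP ->; rewrite eqxx.
Qed.

Lemma modeprodK (M N : forall a, 'M[C]_(n a)) :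
  (forall a, (3 <= a < d.+1)%N -> M a *m N a = 1%:M) ->
  forall m1 m2 (A : tensor R d n m1 m2), modeprod M (modeprod N A) = A.
Proof.
move=> HMN m1 m2 A; apply/ffunP => j; rewrite !ffunE.
under eq_bigr do rewrite ffunE scaler_sumr.
rewrite exchange_big /=.
under eq_bigr do under eq_bigr do rewrite scalerA.
under eq_bigr do rewrite -scaler_suml ker_mul //.
rewrite (bigD1 j) //= eqxx scale1r big1 ?addr0 // => j'' Hj.
by rewrite eq_sym (negbTE Hj) scale0r.
Qed.

End Kernel.

Section Mx.
Variable R : realType.
Local Notation C := (R[i]).

Lemma ctmxM m k p (A : 'M[C]_(m, k)) (B : 'M[C]_(k, p)) :
  ctmx (A *m B) = ctmx B *m ctmx A.
Proof.
apply/matrixP => i j; rewrite !mxE rmorph_sum; apply: eq_bigr => l _.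
by rewrite !mxE rmorphM mulrC.
Qed.

Lemma ctmxK m k (A : 'M[C]_(m, k)) : ctmx (ctmx A) = A.
Proof. by apply/matrixP => i j; rewrite !mxE conjCK. Qed.

Lemma ctmx1 m : ctmx (1%:M : 'M[C]_m) = 1%:M.
Proof. by apply/matrixP => i j; rewrite !mxE rmorph_nat eq_sym. Qed.

Lemma ctmx0 m k : ctmx (0 : 'M[C]_(m, k)) = 0.
Proof. by apply/matrixP => i j; rewrite !mxE rmorph0. Qed.

Lemma ctmxZ m k a (A : 'M[C]_(m, k)) : ctmx (a *: A) = a^* *: ctmx A.
Proof. by apply/matrixP => i j; rewrite !mxE rmorphM. Qed.

Lemma ctmx_row_mx m k1 k2 (A : 'M[C]_(m, k1)) (B : 'M[C]_(m, k2)) :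
  ctmx (row_mx A B) = col_mx (ctmx A) (ctmx B).
Proof. by rewrite /ctmx map_row_mx tr_row_mx. Qed.

Definition dmx m1 m2 t (f : nat -> C) : 'M[C]_(m1, m2) :=
  \matrix_(i, j) if ((i : nat) == j) && (i < t)%N then f i else 0.

Lemma dmx_ext m1 m2 t f g : (forall i, (i < t)%N -> f i = g i) ->
  dmx m1 m2 t f = dmx m1 m2 t g.
Proof.
move=> H; apply/matrixP => i j; rewrite !mxE.
by case: (ltnP i t) => Hi; rewrite ?andbF ?andbT ?H.
Qed.

Lemma dmx_mul m p q t f g : (t <= p)%N ->
  dmx m p t f *m dmx p q t g = dmx m q t (fun i => f i * g i).
Proof.
move=> Htp; apply/matrixP => i j; rewrite !mxE.
case: (ltnP i t) => Hit.
- have Hip : (i < p)%N by apply: leq_trans Htp.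
  rewrite (bigD1 (Ordinal Hip)) //= !mxE /= eqxx Hit /= big1 ?addr0.
    by case: ((i : nat) == j); rewrite ?Hit ?mulr0.
  move=> k Hk; rewrite !mxE.
  have -> : ((i : nat) == k) = false.
    apply/negP => /eqP E; move/eqP: Hk; apply; apply: val_inj => /=.
    by rewrite E.
  by rewrite mul0r.
- have E : (i < t)%N = false by rewrite ltnNge Hit.
  rewrite andbF big1 // => k _.
  by rewrite !mxE E andbF mul0r.
Qed.

Lemma pid_dmx m k t : (pid_mx t : 'M[C]_(m, k)) = dmx m k t (fun _ => 1).
Proof.
apply/matrixP => i j; rewrite /pid_mx !mxE.
by case: ((i : nat) == j); case: (i < t)%N.
Qed.

Lemma one_dmx m : (1%:M : 'M[C]_m) = dmx m m m (fun _ => 1).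
Proof. by rewrite -pid_mx_1 pid_dmx. Qed.

Lemma ctmx_dmx m1 m2 t f :
  ctmx (dmx m1 m2 t f) = dmx m2 m1 t (fun i => (f i)^*).
Proof.
apply/matrixP => i j; rewrite !mxE eq_sym.
case: eqP => [E|_] /=; last by rewrite rmorph0.
by rewrite E; case: (j < t)%N; rewrite ?rmorph0.
Qed.

Lemma insub_ord' m x (Hx : (x < m)%N) : insub x = Some (Ordinal Hx).
Proof.
case: insubP => [u _ Hu|]; last by rewrite Hx.
by congr Some; apply: val_inj.
Qed.

Lemma insub_none m x : ~~ (x < m)%N -> (insub x : option 'I_m) = None.
Proof. by move=> H; apply: insubN. Qed.

Lemma dgnat_out m1 m2 (S : 'M[C]_(m1, m2)) i :
  ~~ ((i < m1) && (i < m2))%N -> dgnat S i = 0.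
Proof.
rewrite negb_and => /orP[H|H]; rewrite /dgnat (insub_none H) //.
by case: (insub i : option 'I_m1).
Qed.

Lemma dgnatE m1 m2 (S : 'M[C]_(m1, m2)) (r : 'I_m1) (c : 'I_m2) :
  (r : nat) = c -> dgnat S r = S r c.
Proof.
move=> E; rewrite /dgnat (insub_ord' (ltn_ord r)).
have Hc : (r < m2)%N by rewrite E.
rewrite (insub_ord' Hc); congr (S _ _); by apply: val_inj.
Qed.

Lemma dgnat_dmx m1 m2 t f i :
  dgnat (dmx m1 m2 t f) i = if [&& (i < m1), (i < m2) & (i < t)]%N then f i else 0.
Proof.
case: (boolP ((i < m1) && (i < m2))%N) => [/andP[H1 H2]|H].
  rewrite (@dgnatE _ _ _ (Ordinal H1) (Ordinal H2)) // mxE /= eqxx H1 H2.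
  by case: (i < t)%N.
rewrite dgnat_out //.
by move: H; case: (i < m1)%N; case: (i < m2)%N.
Qed.

Lemma diag_dmx m1 m2 t (S : 'M[C]_(m1, m2)) :
  (forall (r : 'I_m1) (c : 'I_m2), (r : nat) != c -> S r c = 0) ->
  (forall i, (t <= i)%N -> dgnat S i = 0) ->
  S = dmx m1 m2 t (dgnat S).
Proof.
move=> Hd Ht; apply/matrixP => r c; rewrite mxE.
case: (eqVneq (r : nat) c) => [E|NE] /=; last by rewrite Hd.
rewrite (dgnatE S E).
by case: (ltnP r t) => // H; rewrite -(dgnatE S E) Ht.
Qed.

Definition shat_g m1 m2 (g : nat -> C -> C) (S : 'M[C]_(m1, m2)) : 'M[C]_(m1, m2) :=
  \matrix_(r, c) if (r : nat) == c then g r (S r c) else 0.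

Lemma shat_dmx m1 m2 t (g : nat -> C -> C) f : (forall i, g i 0 = 0) ->
  shat_g g (dmx m1 m2 t f) = dmx m1 m2 t (fun i => g i (f i)).
Proof.
move=> g0; apply/matrixP => r c; rewrite !mxE.
by case: eqP => //= _; case: (r < t)%N; rewrite ?g0.
Qed.

Lemma cnorm_pos m (v : 'cV[C]_m) : v != 0 -> 0 < (ctmx v *m v) 0 0.
Proof.
move=> Hv; rewrite mxE.
have Ht : forall k : 'I_m, ctmx v 0 k * v k 0 = `|v k 0| ^+ 2.
  by move=> k; rewrite !mxE normCK mulrC.
under eq_bigr do rewrite Ht.
rewrite lt_def sumr_ge0 ?andbT => [|k _]; last by rewrite exprn_ge0.
apply/eqP => H0; move/eqP: Hv; apply; apply/matrixP => k l.
have := @psumr_eq0P _ _ xpredT (fun k : 'I_m => `|v k 0| ^+ 2) _ H0 k.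
rewrite ord1 mxE => /(_ (fun i _ => exprn_ge0 2 (normr_ge0 _)) isT) /eqP.
by rewrite sqrf_eq0 normr_eq0 => /eqP ->.
Qed.

End Mx.

Section Complete.
Variable R : realType.
Local Notation C := (R[i]).

Definition unitary m (W : 'M[C]_m) := ctmx W *m W = 1%:M /\ W *m ctmx W = 1%:M.

Lemma iso_rank m r (M : 'M[C]_(m, r)) : ctmx M *m M = 1%:M -> (r <= m)%N.
Proof.
move=> HM; have := mxrankM_maxr (ctmx M) M; rewrite HM mxrank1 => H.
exact: leq_trans H (rank_leq_row M).
Qed.

Lemma complete_aux m s : forall r (M : 'M[C]_(m, r)), (m - r)%N = s ->
  ctmx M *m M = 1%:M -> exists W : 'M[C]_m, unitary W /\ W *m pid_mx r = M.
Proof.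
elim: s => [|s IH] r M Hs HM; have Hrm := iso_rank HM.
  have Er : r = m by lia.
  subst r; exists M; split; last by rewrite pid_mx_1 mulmx1.
  by split => //; apply: mulmx1C.
have Hrm' : (r < m)%N by lia.
set P := 1%:M - M *m ctmx M.
have HMP : ctmx M *m P = 0.
  by rewrite /P mulmxBr mulmx1 mulmxA HM mul1mx subrr.
have [i [j Hij]] : exists i j, P i j != 0.
  case: (pickP (fun ij : 'I_m * 'I_m => P ij.1 ij.2 != 0)) => [[i j] Hij|H0].
    by exists i, j.
  exfalso.
  have P0 : P = 0.
    apply/matrixP => i j; have := H0 (i, j); rewrite /= => /negbFE/eqP ->.
    by rewrite mxE.
  have H1 : M *m ctmx M = 1%:M.
    by move/eqP: P0; rewrite /P subr_eq0 => /eqP <-.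
  have := mxrankM_maxl M (ctmx M); rewrite H1 mxrank1 => H.
  have := leq_trans H (rank_leq_col M); lia.
set v := col j P.
have Hv : v != 0.
  apply/eqP => v0; have := congr1 (fun A : 'cV_m => A i 0) v0.
  by rewrite /v mxE [RHS]mxE => E; rewrite E eqxx in Hij.
have HMv : ctmx M *m v = 0 by rewrite /v colE mulmxA HMP mul0mx.
set c := (ctmx v *m v) 0 0.
have c_gt0 : 0 < c by apply: cnorm_pos.
set lam := (sqrtC c)^-1.
set u := lam *: v.
have Hlam : lam^* = lam.
  by apply: conj_Creal; rewrite rpredV sqrtC_real // ltW.
have Huu : ctmx u *m u = 1%:M.
  rewrite /u ctmxZ -scalemxAl -scalemxAr scalerA Hlam.
  rewrite [ctmx v *m v]mx11_scalar -/c -scalemx1 scalerA.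
  rewrite -expr2 /lam exprVn sqrtCK mulVf ?scale1r //.
  exact: lt0r_neq0.
have HMu : ctmx M *m u = 0 by rewrite /u -scalemxAr HMv scaler0.
have HuM : ctmx u *m M = 0 by rewrite -[M]ctmxK -ctmxM HMu ctmx0.
set M' := row_mx M u.
have HM' : ctmx M' *m M' = 1%:M.
  rewrite /M' ctmx_row_mx mul_col_row HM HMu HuM Huu.
  by rewrite -scalar_mx_block.
have Hs' : (m - (r + 1))%N = s by lia.
have [W [HW HWp]] := IH (r + 1)%N M' Hs' HM'.
exists W; split => //.
have -> : (pid_mx r : 'M[C]_(m, r)) =
          (pid_mx (r + 1) : 'M[C]_(m, r + 1)) *m (pid_mx r : 'M[C]_(r + 1, r)).
  by rewrite mul_pid_mx; congr pid_mx; lia.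
by rewrite mulmxA HWp /M' pid_mx_col mul_row_col mulmx1 mulmx0 addr0.
Qed.

Lemma complete m r (M : 'M[C]_(m, r)) : ctmx M *m M = 1%:M ->
  exists W : 'M[C]_m, unitary W /\ W *m pid_mx r = M.
Proof. by move=> HM; apply: (@complete_aux m (m - r)%N r M). Qed.

End Complete.

Section Slices.
Variable R : realType.
Local Notation C := (R[i]).

Definition sdiag m1 m2 (S : 'M[C]_(m1, m2)) :=
  forall (r : 'I_m1) (c : 'I_m2), (r : nat) != c -> S r c = 0.
Definition sgood m1 m2 (S : 'M[C]_(m1, m2)) :=
  sdiag S /\ forall i, 0 <= dgnat S i /\ dgnat S i.+1 <= dgnat S i.

Lemma sgood_dmx m1 m2 t f : (forall i, 0 <= f i) -> (forall i, f i.+1 <= f i) ->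
  sgood (dmx m1 m2 t f).
Proof.
move=> H0 H1; split.
  by move=> r c Hrc; rewrite mxE (negbTE Hrc).
move=> i; rewrite !dgnat_dmx; split; first by case: ifP.
case: ifP => H; last by case: ifP.
have -> : [&& (i < m1), (i < m2) & (i < t)]%N.
  by move/and3P: H => [A B D]; apply/and3P; split; apply: ltnW.
exact: H1.
Qed.

Lemma rmulA_l m p q s (X : 'M[C]_(m, p)) (Y : 'M[C]_(p, q)) (Z : 'M[C]_(m, q)) :
  X *m Y = Z -> forall T : 'M[C]_(q, s), X *m (Y *m T) = Z *m T.
Proof. by move=> H T; rewrite mulmxA H. Qed.

Lemma slice1 n1 n2 k (Q1 : 'M[C]_(n1, k)) (Q2 : 'M[C]_(n2, k)) (Ub Vb Sb : 'M[C]_k) :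
  ctmx Q1 *m Q1 = 1%:M -> ctmx Q2 *m Q2 = 1%:M -> unitary Ub -> unitary Vb ->
  sgood Sb ->
  exists W1 : 'M[C]_n1, exists W2 : 'M[C]_n2, exists St : 'M[C]_(n1, n2),
  [/\ unitary W1, unitary W2, sgood St,
      Q1 *m (Ub *m Sb *m ctmx Vb) *m ctmx Q2 = W1 *m St *m ctmx W2 &
      forall g, (forall i, g i 0 = 0) ->
        W1 *m shat_g g St *m ctmx W2 = Q1 *m (Ub *m shat_g g Sb *m ctmx Vb) *m ctmx Q2].
Proof.
move=> HQ1 HQ2 [HUb1 HUb2] [HVb1 HVb2] [Sd Sg].
set sig := dgnat Sb.
have Sbd : Sb = dmx k k k sig.
  apply: diag_dmx => // i Hi; apply: dgnat_out; apply/negP => /andP[A _]; lia.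
have iso1 : ctmx (Q1 *m Ub) *m (Q1 *m Ub) = 1%:M.
  by rewrite ctmxM -mulmxA (rmulA_l HQ1) mul1mx.
have iso2 : ctmx (Q2 *m Vb) *m (Q2 *m Vb) = 1%:M.
  by rewrite ctmxM -mulmxA (rmulA_l HQ2) mul1mx.
have [W1 [HW1 HW1p]] := complete iso1.
have [W2 [HW2 HW2p]] := complete iso2.
have Eid : forall f, dmx n1 n2 k f =
    (pid_mx k : 'M[C]_(n1, k)) *m dmx k k k f *m ctmx (pid_mx k : 'M[C]_(n2, k)).
  move=> f; rewrite !pid_dmx ctmx_dmx dmx_mul // dmx_mul //.
  by apply: dmx_ext => i _; rewrite conjC1 mul1r mulr1.
have HW2' : ctmx (pid_mx k : 'M[C]_(n2, k)) *m ctmx W2 = ctmx Vb *m ctmx Q2.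
  by rewrite -ctmxM HW2p ctmxM.
have key : forall f, W1 *m dmx n1 n2 k f *m ctmx W2 =
    Q1 *m (Ub *m dmx k k k f *m ctmx Vb) *m ctmx Q2.
  move=> f; rewrite Eid !mulmxA HW1p -(mulmxA _ _ (ctmx W2)) HW2'.
  by rewrite !mulmxA.
exists W1, W2, (dmx n1 n2 k sig); split => //.
- apply: sgood_dmx => i; [exact: (Sg i).1 | exact: (Sg i).2].
- by rewrite key -Sbd.
- by move=> g g0; rewrite Sbd !shat_dmx // key.
Qed.

End Slices.

Section Slices2.
Variable R : realType.
Local Notation C := (R[i]).

Lemma slice2 n1 n2 k (Q1 : 'M[C]_(n1, k)) (Q2 : 'M[C]_(n2, k)) (Bh : 'M[C]_k)
    (Ua : 'M[C]_n1) (Va : 'M[C]_n2) (Sa : 'M[C]_(n1, n2)) :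
  ctmx Q1 *m Q1 = 1%:M -> ctmx Q2 *m Q2 = 1%:M -> unitary Ua -> unitary Va ->
  sgood Sa -> Q1 *m Bh *m ctmx Q2 = Ua *m Sa *m ctmx Va ->
  exists Ub : 'M[C]_k, exists Vb : 'M[C]_k, exists Sb : 'M[C]_k,
  [/\ unitary Ub, unitary Vb, sgood Sb, Bh = Ub *m Sb *m ctmx Vb &
      forall g, (forall i, g i 0 = 0) ->
        Ua *m shat_g g Sa *m ctmx Va = Q1 *m (Ub *m shat_g g Sb *m ctmx Vb) *m ctmx Q2].
Proof.
move=> HQ1 HQ2 [HUa1 HUa2] [HVa1 HVa2] [Sd Sg] HA.
set sig := dgnat Sa.
set mn := minn n1 n2.
set r := find (fun i => sig i == 0) (iota 0 mn).
have r_le : (r <= mn)%N by rewrite /r -[X in (_ <= X)%N](size_iota 0 mn) find_size.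
have r_n1 : (r <= n1)%N by move: r_le; rewrite /mn; lia.
have r_n2 : (r <= n2)%N by move: r_le; rewrite /mn; lia.
have sig_nz : forall i, (i < r)%N -> sig i != 0.
  move=> i Hi; have := before_find 0%N Hi; rewrite nth_iota; last by lia.
  by rewrite add0n => ->.
have sig_r : sig r = 0.
  case: (ltnP r mn) => H.
    have Hh : has (fun i => sig i == 0) (iota 0 mn) by rewrite has_find size_iota.
    by have := nth_find 0%N Hh; rewrite -/r nth_iota // add0n => /eqP.
  apply: dgnat_out; apply/negP => /andP[H1 H2]; move: H; rewrite /mn; lia.
have sig0 : forall i, (r <= i)%N -> sig i = 0.
  elim => [|i IH] Hi.
    have Er : r = 0%N by move: Hi; rewrite leqn0 => /eqP.
    by rewrite -Er.
  case: (eqVneq r i.+1) => [<-|Hne] //.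
  have Hri : (r <= i)%N by lia.
  apply/le_anti; rewrite (Sg i.+1).1 andbT -(IH Hri); exact: (Sg i).2.
have Sad : Sa = dmx n1 n2 r sig by apply: diag_dmx.
pose Sr := dmx r r r sig.
pose Sri := dmx r r r (fun i => (sig i)^-1).
have HSr : Sr *m Sri = 1%:M.
  rewrite dmx_mul // one_dmx; apply: dmx_ext => i Hi; rewrite mulfV //.
  exact: sig_nz.
have HSr' : Sri *m Sr = 1%:M.
  rewrite dmx_mul // one_dmx; apply: dmx_ext => i Hi; rewrite mulVf //.
  exact: sig_nz.
pose Ea : 'M[C]_(n1, r) := dmx n1 r r (fun _ => 1).
pose Eb : 'M[C]_(r, n2) := dmx r n2 r (fun _ => 1).
have Efact : forall f, dmx n1 n2 r f = Ea *m dmx r r r f *m Eb.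
  move=> f; rewrite dmx_mul // dmx_mul //.
  by apply: dmx_ext => i _; rewrite mul1r mulr1.
have HEb : Eb *m ctmx Eb = 1%:M.
  rewrite ctmx_dmx dmx_mul // one_dmx; apply: dmx_ext => i _.
  by rewrite conjC1 mulr1.
have HEa : ctmx Ea *m Ea = 1%:M.
  rewrite ctmx_dmx dmx_mul // one_dmx; apply: dmx_ext => i _.
  by rewrite conjC1 mulr1.
have HSa : Sa = Ea *m Sr *m Eb by rewrite Sad Efact.
pose Z := Bh *m ctmx Q2 *m Va *m ctmx Eb *m Sri.
have HUaEa : Ua *m Ea = Q1 *m Z.
  have -> : Ua *m Ea = Ua *m Sa *m ctmx Eb *m Sri.
    rewrite HSa -!mulmxA; congr (Ua *m _).
    by rewrite (rmulA_l HEb) mul1mx HSr mulmx1.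
  have -> : Ua *m Sa = Ua *m Sa *m ctmx Va *m Va.
    by rewrite -mulmxA HVa1 mulmx1.
  by rewrite -HA /Z !mulmxA.
pose Z2 := ctmx Bh *m ctmx Q1 *m Ua *m Ea *m ctmx Sri.
have HVaEb : Va *m ctmx Eb = Q2 *m Z2.
  have E1 : ctmx Sr *m ctmx Sri = 1%:M by rewrite -ctmxM HSr' ctmx1.
  have -> : Va *m ctmx Eb = Va *m ctmx Sa *m Ea *m ctmx Sri.
    rewrite HSa !ctmxM -!mulmxA; congr (Va *m _).
    by rewrite (rmulA_l HEa) mul1mx E1 mulmx1.
  have -> : Va *m ctmx Sa = Va *m ctmx Sa *m ctmx Ua *m Ua.
    by rewrite -mulmxA HUa1 mulmx1.
  have -> : Va *m ctmx Sa *m ctmx Ua = ctmx (Ua *m Sa *m ctmx Va).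
    by rewrite !ctmxM ctmxK mulmxA.
  by rewrite -HA !ctmxM ctmxK /Z2 !mulmxA.
have isoZ : ctmx Z *m Z = 1%:M.
  have -> : ctmx Z *m Z = ctmx (Q1 *m Z) *m (Q1 *m Z).
    by rewrite ctmxM -mulmxA (rmulA_l HQ1) mul1mx.
  by rewrite -HUaEa ctmxM mulmxA -(mulmxA _ (ctmx Ua)) HUa1 mulmx1 HEa.
have isoZ2 : ctmx Z2 *m Z2 = 1%:M.
  have -> : ctmx Z2 *m Z2 = ctmx (Q2 *m Z2) *m (Q2 *m Z2).
    by rewrite ctmxM -mulmxA (rmulA_l HQ2) mul1mx.
  by rewrite -HVaEb ctmxM ctmxK mulmxA -(mulmxA _ (ctmx Va)) HVa1 mulmx1 HEb.
clearbody Z Z2 Ea Eb.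
have [W1 [HW1 HW1p]] := complete isoZ.
have [W2 [HW2 HW2p]] := complete isoZ2.
have Fid : forall f, dmx k k r f =
    (pid_mx r : 'M[C]_(k, r)) *m dmx r r r f *m ctmx (pid_mx r : 'M[C]_(k, r)).
  move=> f; rewrite !pid_dmx ctmx_dmx dmx_mul // dmx_mul //.
  by apply: dmx_ext => i _; rewrite conjC1 mul1r mulr1.
have HW2' : ctmx (pid_mx r : 'M[C]_(k, r)) *m ctmx W2 = ctmx Z2.
  by rewrite -ctmxM HW2p.
have keyB : forall f, W1 *m dmx k k r f *m ctmx W2 = Z *m dmx r r r f *m ctmx Z2.
  move=> f; rewrite Fid !mulmxA HW1p -(mulmxA _ _ (ctmx W2)) HW2'.
  by rewrite ?mulmxA.
have ZE : Z = ctmx Q1 *m Ua *m Ea.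
  by rewrite -mulmxA HUaEa mulmxA HQ1 mul1mx.
have Z2E : ctmx Z2 = Eb *m ctmx Va *m Q2.
  have Z2' : Z2 = ctmx Q2 *m Va *m ctmx Eb.
    by rewrite -mulmxA HVaEb mulmxA HQ2 mul1mx.
  by rewrite Z2' !ctmxM !ctmxK mulmxA.
exists W1, W2, (dmx k k r sig); split => //.
- apply: sgood_dmx => i; [exact: (Sg i).1 | exact: (Sg i).2].
- rewrite keyB ZE Z2E.
  have -> : ctmx Q1 *m Ua *m Ea *m Sr *m (Eb *m ctmx Va *m Q2)
          = ctmx Q1 *m (Ua *m Sa *m ctmx Va) *m Q2.
    by rewrite HSa !mulmxA.
  by rewrite -HA !mulmxA HQ1 mul1mx -mulmxA HQ2 mulmx1.
- move=> g g0; rewrite shat_dmx // Sad shat_dmx // Efact keyB.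
  rewrite !mulmxA -HUaEa -(mulmxA _ (ctmx Z2) (ctmx Q2)) -ctmxM -HVaEb.
  by rewrite ctmxM ctmxK !mulmxA.
Qed.

End Slices2.

Section TensorLemmas.
Variable R : realType.
Local Notation C := (R[i]).
Variables (d : nat) (n : nat -> nat) (U : forall a : nat, 'M[C]_(n a)).
Hypothesis npos : forall c, (3 <= c < d.+1)%N -> (0 < n c)%N.
Hypothesis Uunit : forall a, (3 <= a < d.+1)%N -> U a \in unitmx.

Lemma LtK m1 m2 (A : tensor R d n m1 m2) : Lt U (Linv U A) = A.
Proof.
apply: (@modeprodK R d n npos U (fun a => invmx (U a))).
by move=> a Ha; apply: mulmxV; apply: Uunit.
Qed.

Lemma LinvK m1 m2 (A : tensor R d n m1 m2) : Linv U (Lt U A) = A.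
Proof.
apply: (@modeprodK R d n npos (fun a => invmx (U a)) U).
by move=> a Ha; apply: mulVmx; apply: Uunit.
Qed.

Lemma tensor_eq m1 m2 (A B : tensor R d n m1 m2) :
  (forall j, Lt U A j = Lt U B j) -> A = B.
Proof.
move=> H; rewrite -(LinvK A) -(LinvK B); congr (Linv U _).
by apply/ffunP.
Qed.

Lemma Lt_tprod m1 m2 m3 (A : tensor R d n m1 m2) (B : tensor R d n m2 m3) j :
  Lt U (tprod U A B) j = Lt U A j *m Lt U B j.
Proof. by rewrite /tprod LtK ffunE. Qed.

Lemma Lt_ttr m1 m2 (A : tensor R d n m1 m2) j :
  Lt U (ttr U A) j = ctmx (Lt U A j).
Proof. by rewrite /ttr LtK ffunE. Qed.

Lemma Lt_tid m j : Lt U (tid d U m) j = 1%:M.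
Proof. by rewrite /tid LtK ffunE. Qed.

Lemma Lt_Linv m1 m2 (F : 'I_(NN d n) -> 'M[C]_(m1, m2)) j :
  Lt U (Linv U [ffun j => F j]) j = F j.
Proof. by rewrite LtK ffunE. Qed.

Lemma modeprod_sdiag (M : forall a, 'M[C]_(n a)) m1 m2 (S : tensor R d n m1 m2) :
  (forall j, sdiag (S j)) -> forall j, sdiag (modeprod M S j).
Proof.
move=> H j r c Hrc; rewrite ffunE summxE big1 // => j' _.
by rewrite mxE H // mulr0.
Qed.

Lemma fdiag_Linv m1 m2 (F : 'I_(NN d n) -> 'M[C]_(m1, m2)) :
  (forall j, sdiag (F j)) -> fdiagonal (Linv U [ffun j => F j]).
Proof.
move=> H j r c Hrc; apply: modeprod_sdiag => // j'.
by rewrite ffunE.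
Qed.

Lemma sdiag_Lt m1 m2 (S : tensor R d n m1 m2) :
  fdiagonal S -> forall j, sdiag (Lt U S j).
Proof. by move=> H j; apply: modeprod_sdiag => j' r c; apply: H. Qed.

Lemma orth_slices m (W : tensor R d n m m) :
  Defs.orthogonal U W -> forall j, unitary (Lt U W j).
Proof.
move=> [H1 H2] j; split.
  by have := congr1 (fun T => Lt U T j) H1; rewrite /= Lt_tprod Lt_ttr Lt_tid.
by have := congr1 (fun T => Lt U T j) H2; rewrite /= Lt_tprod Lt_ttr Lt_tid.
Qed.

Lemma slices_orth m (F : 'I_(NN d n) -> 'M[C]_m) :
  (forall j, unitary (F j)) -> Defs.orthogonal U (Linv U [ffun j => F j]).
Proof.
move=> H; split; apply: tensor_eq => j;
  by rewrite Lt_tprod Lt_ttr Lt_tid Lt_Linv; case: (H j).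
Qed.

Lemma tsvd_good m1 m2 (S : tensor R d n m1 m2) :
  fdiagonal S ->
  (forall (j : 'I_(NN d n)) (i : nat), (i < minn m1 m2)%N -> 0 <= dgnat (Lt U S j) i) ->
  (forall (j : 'I_(NN d n)) (i : nat), (i.+1 < minn m1 m2)%N ->
          dgnat (Lt U S j) i.+1 <= dgnat (Lt U S j) i) ->
  forall j, sgood (Lt U S j).
Proof.
move=> Hd H0 H1 j; split; first exact: sdiag_Lt.
have Hge : forall i, 0 <= dgnat (Lt U S j) i.
  move=> i; case: (ltnP i (minn m1 m2)) => Hi; first exact: H0.
  by rewrite dgnat_out //; apply/negP => /andP[A B]; move: Hi; lia.
move=> i; split => //.
case: (ltnP i.+1 (minn m1 m2)) => Hi; first exact: H1.
by rewrite dgnat_out //; apply/negP => /andP[A B]; move: Hi; lia.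
Qed.

End TensorLemmas.

Lemma GST0 (R : realType) (w p : R) : 0 <= w -> 0 <= p -> GST 0 w p = 0.
Proof.
move=> Hw Hp; rewrite /GST; case: (w == 0) => //.
rewrite normr0 /gst_delta ifT //.
by apply: addr_ge0; [apply: powR_ge0 | apply: mulr_ge0; [apply: mulr_ge0 | apply: powR_ge0]].
Qed.

Unset Implicit Arguments.
Set Strict Implicit.

Theorem proposition2 (R : realType) (d : nat) (n : nat -> nat)
    (U : forall a : nat, 'M[R[i]]_(n a)) (alpha : nat -> R)
    (n1 n2 k : nat) (tau p : R) (w : nat -> nat -> R)
    (Q1 : tensor R d n n1 k) (Q2 : tensor R d n n2 k) (B : tensor R d n k k) :
  (3 <= d)%N ->
  (forall a, (3 <= a <= d)%N -> (0 < n a)%N) ->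
  (0 < n1)%N -> (0 < n2)%N -> (0 < k)%N ->
  (forall a, (3 <= a <= d)%N ->
     0 < alpha a /\
     U a *m ctmx (U a) = ((alpha a)%:C%C)%:M /\
     ctmx (U a) *m U a = ((alpha a)%:C%C)%:M) ->
  0 < tau -> 0 < p < 1 ->
  (forall i j, 0 <= w i j) ->
  real_tensor Q1 -> real_tensor Q2 -> real_tensor B ->
  partially_orthogonal U Q1 -> partially_orthogonal U Q2 ->
  real_tensor (tprod U (tprod U Q1 B) (ttr U Q2)) ->
  (forall X : tensor R d n k k,
     GTSVT U w p tau B X ->
     GTSVT U w p tau (tprod U (tprod U Q1 B) (ttr U Q2))
                     (tprod U (tprod U Q1 X) (ttr U Q2)))
  /\
  (forall Y : tensor R d n n1 n2,
     GTSVT U w p tau (tprod U (tprod U Q1 B) (ttr U Q2)) Y ->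
     exists X : tensor R d n k k,
       GTSVT U w p tau B X /\ Y = tprod U (tprod U Q1 X) (ttr U Q2)).
Proof.
move=> Hd Hn Hn1 Hn2 Hk HU Htau /andP[Hp0 Hp1] Hw _ _ _ HQ1 HQ2 _.
have npos : forall c, (3 <= c < d.+1)%N -> (0 < n c)%N.
  by move=> c Hc; apply: Hn; lia.
have Uunit : forall a, (3 <= a < d.+1)%N -> U a \in unitmx.
  move=> a Ha; have [Ha0 [_ H2]] := HU a ltac:(lia).
  have Hne : (alpha a)%:C%C != 0 :> R[i].
    by apply: lt0r_neq0; rewrite (ltcR 0).
  have : ((((alpha a)%:C%C)^-1) *: ctmx (U a)) *m U a = 1%:M.
    by rewrite -scalemxAl H2 scale_scalar_mx mulVf.
  by case/mulmx1_unit.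
pose g (j : nat) := fun (i : nat) (x : R[i]) => (GST (complex.Re x) (tau * w i j) p)%:C%C.
have g0 : forall j i, g j i 0 = 0.
  move=> j i; rewrite /g /= GST0 //; last exact: ltW.
  by apply: mulr_ge0; [exact: ltW | exact: Hw].
have LtShat : forall m1 m2 (S : tensor R d n m1 m2) (j : 'I_(NN d n)),
    Lt U (Linv U (Shat U w p tau S)) j = shat_g (g j) (Lt U S j).
  by move=> m1 m2 S j; rewrite (LtK npos Uunit) ffunE.
have isoQ : forall m (Q : tensor R d n m k), partially_orthogonal U Q ->
    forall j, ctmx (Lt U Q j) *m Lt U Q j = 1%:M.
  move=> m Q HQ j; have := congr1 (fun T => Lt U T j) HQ.
  by rewrite /= (Lt_tprod npos Uunit) (Lt_ttr npos Uunit) (Lt_tid npos Uunit).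
have iQ1 := isoQ _ _ HQ1; have iQ2 := isoQ _ _ HQ2.
have LtP := Lt_tprod npos Uunit.
have LtT := Lt_ttr npos Uunit.
have LtL := Lt_Linv npos Uunit.
have Teq := tensor_eq npos Uunit.
have Orth := orth_slices npos Uunit.
have Sorth := slices_orth npos Uunit.
split.
- move=> X [Ub [Sb [Vb [[[oUb oVb] fdS nn ni eqB] eqX]]]].
  have HS : forall j : 'I_(NN d n), exists T : 'M[R[i]]_n1 * 'M[R[i]]_n2 * 'M[R[i]]_(n1, n2),
    [/\ unitary T.1.1, unitary T.1.2, sgood T.2,
      Lt U Q1 j *m (Lt U Ub j *m Lt U Sb j *m ctmx (Lt U Vb j)) *m ctmx (Lt U Q2 j)
        = T.1.1 *m T.2 *m ctmx T.1.2 &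
      forall h, (forall i, h i 0 = 0) -> T.1.1 *m shat_g h T.2 *m ctmx T.1.2 =
        Lt U Q1 j *m (Lt U Ub j *m shat_g h (Lt U Sb j) *m ctmx (Lt U Vb j)) *m ctmx (Lt U Q2 j)].
    move=> j.
    have [W1 [W2 [St H]]] := slice1 (iQ1 j) (iQ2 j) (Orth _ _ oUb j) (Orth _ _ oVb j)
       (tsvd_good fdS nn ni j).
    by exists (W1, W2, St).
  have [F HF] := choice HS.
  exists (Linv U [ffun j => (F j).1.1]), (Linv U [ffun j => (F j).2]),
         (Linv U [ffun j => (F j).1.2]).
  split.
  + split.
    * by split; apply: Sorth => j; case: (HF j).
    * by apply: fdiag_Linv => j; case: (HF j) => _ _ [].
    * by move=> j i _; rewrite LtL; case: (HF j) => _ _ [_ /(_ i) []].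
    * by move=> j i _; rewrite !LtL; case: (HF j) => _ _ [_ /(_ i) []].
    * apply: Teq => j; rewrite eqB !LtP !LtT !LtL.
      by case: (HF j) => _ _ _ -> _.
  + apply: Teq => j; rewrite eqX !LtP !LtT ?LtP ?LtShat !LtL ?LtShat ?LtL.
    by case: (HF j) => _ _ _ _ /(_ (g j) (g0 j)) ->.
- move=> Y [Ua [Sa [Va [[[oUa oVa] fdS nn ni eqA] eqY]]]].
  have HS : forall j : 'I_(NN d n), exists T : 'M[R[i]]_k * 'M[R[i]]_k * 'M[R[i]]_k,
    [/\ unitary T.1.1, unitary T.1.2, sgood T.2,
      Lt U B j = T.1.1 *m T.2 *m ctmx T.1.2 &
      forall h, (forall i, h i 0 = 0) ->
        Lt U Ua j *m shat_g h (Lt U Sa j) *m ctmx (Lt U Va j) =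
        Lt U Q1 j *m (T.1.1 *m shat_g h T.2 *m ctmx T.1.2) *m ctmx (Lt U Q2 j)].
    move=> j.
    have HAj : Lt U Q1 j *m Lt U B j *m ctmx (Lt U Q2 j)
             = Lt U Ua j *m Lt U Sa j *m ctmx (Lt U Va j).
      by have := congr1 (fun T => Lt U T j) eqA; rewrite /= !LtP !LtT.
    have [Ub [Vb [Sb H]]] := slice2 (iQ1 j) (iQ2 j) (Orth _ _ oUa j) (Orth _ _ oVa j)
       (tsvd_good fdS nn ni j) HAj.
    by exists (Ub, Vb, Sb).
  have [F HF] := choice HS.
  exists (tprod U (tprod U (Linv U [ffun j => (F j).1.1])
            (Linv U (Shat U w p tau (Linv U [ffun j => (F j).2]))))
            (ttr U (Linv U [ffun j => (F j).1.2]))).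
  split.
  + exists (Linv U [ffun j => (F j).1.1]), (Linv U [ffun j => (F j).2]),
         (Linv U [ffun j => (F j).1.2]).
    split => //; split.
    * by split; apply: Sorth => j; case: (HF j).
    * by apply: fdiag_Linv => j; case: (HF j) => _ _ [].
    * by move=> j i _; rewrite LtL; case: (HF j) => _ _ [_ /(_ i) []].
    * by move=> j i _; rewrite !LtL; case: (HF j) => _ _ [_ /(_ i) []].
    * apply: Teq => j; rewrite !LtP !LtT !LtL.
      by case: (HF j) => _ _ _ -> _.
  + apply: Teq => j; rewrite eqY !LtP !LtT ?LtP ?LtShat !LtL ?LtShat ?LtL.
    by case: (HF j) => _ _ _ _ /(_ (g j) (g0 j)).
Qed.
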